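(* Let $k\ge1$ and let $s_1,s_2\ge0$ be integers with $s_1+s_2\le k$. The determinant of the Gram matrix $G^k_{2s_1+s_2}$ (defined in the context) is a nonzero polynomial in $\mathbb{Z}[x]$ with leading coefficient $1$.
   Context: Let $\mathbb{Z}_2=\{e,g\}$ act on $X=([k]\cup[k'])\times\mathbb{Z}_2$ by $h\cdot(i,a)=(i,ha)$, where $[k]=\{1,\dots,k\}$, $[k']=\{1',\dots,k'\}$. A set partition of a $\mathbb{Z}_2$-stable set is $\mathbb{Z}_2$-stable if $g$ maps blocks to blocks. Identifying $(i,e)\mapsto 2i-1$, $(i,g)\mapsto 2i$ (and similarly for primed vertices), a $\mathbb{Z}_2$-stable set partition of $X$ is a $2k$-partition diagram (top row $[k]\times\mathbb{Z}_2$, bottom row $[k']\times\mathbb{Z}_2$). For partition diagrams: a block meeting both rows is a through class, the propagating number $\sharp^p(d)$ is the number of through classes; the product of $d_1,d_2$ is obtained by placing $d_1$ above $d_2$, identifying bottom vertices of $d_1$ with top vertices of $d_2$, taking the induced partition $d_3$ of the outer rows, and $l(d_1,d_2)$ is the number of connected components lying entirely in the middle row; $\sharp^p(d_1d_2)$ means $\sharp^p(d_3)$. Index set: a block $B$ of a $\mathbb{Z}_2$-stable partition $\pi$ of $[k]\times\mathbb{Z}_2$ is a $\mathbb{Z}_2$-block if $gB=B$ and an $\{e\}$-block otherwise (then $gB\neq B$ is also a block). $J^{2k}_{2s_1+s_2}$ is the set of pairs $D=(\pi,T)$ with $\pi$ a $\mathbb{Z}_2$-stable partition of $[k]\times\mathbb{Z}_2$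 and $T$ a $g$-stable set of blocks of $\pi$ consisting of $s_1$ pairs $\{B,gB\}$ of $\{e\}$-blocks and $s_2$ $\mathbb{Z}_2$-blocks. The diagram $d_D$ has blocks $B\cup B'$ for $B\in T$, and $B$, $B'$ separately for $B\in\pi\setminus T$, where $B'=\{(i',a):(i,a)\in B\}$. The Gram matrix $G^k_{2s_1+s_2}$ has rows and columns indexed by $J^{2k}_{2s_1+s_2}$, with $(D,E)$ entry $x^{l(d_D,d_E)}$ if $\sharp^p(d_Dd_E)=2s_1+s_2$ and $0$ otherwise. *)

(* Defs.v *)
From HB Require Import structures.
From mathcomp Require Import all_boot all_order all_algebra.
Set Implicit Arguments. Unset Strict Implicit. Unset Printing Implicit Defensive.
Import GRing.Theory.
Local Open Scope ring_scope.

(* The Z_2-set [k] x Z_2 : (i, false) = (i,e), (i, true) = (i,g). *)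
Definition V (k : nat) : finType := ('I_k * bool)%type.

Definition gset k (B : {set V k}) : {set V k} := [set (v.1, ~~ v.2) | v in B].

Definition Z2_stable_partition k (P : {set {set V k}}) : bool :=
  partition P [set: V k] && [forall B in P, gset B \in P].

Definition Jset (k s1 s2 : nat) : {set ({set {set V k}} * {set {set V k}})} :=
  [set D : {set {set V k}} * {set {set V k}} | [&& Z2_stable_partition D.1,
              D.2 \subset D.1,
              [forall B in D.2, gset B \in D.2],
              #|[set B in D.2 | gset B == B]| == s2 &
              #|[set B in D.2 | gset B != B]| == (2 * s1)%N]].

(* Partition diagrams on top row V k (tag false) and bottom row V k (tag true). *)
Definition diagram k := {set {set (V k * bool)}}.

Definition lift_top k (B : {set V k}) : {set V k * bool} := [set (v, false) | v in B].
Definition lift_bot k (B : {set V k}) : {set V k * bool} := [set (v, true) | v in B].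

Definition d_of k (D : {set {set V k}} * {set {set V k}}) : diagram k :=
  [set lift_top B :|: lift_bot B | B in D.2]
  :|: [set lift_top B | B in D.1 :\: D.2]
  :|: [set lift_bot B | B in D.1 :\: D.2].

Definition prop_num k (d : diagram k) : nat :=
  #|[set B in d | [exists v, (v, false) \in B] && [exists v, (v, true) \in B]]|.

(* Stacking d1 above d2: three rows V k * 'I_3 (0 = top of d1, 1 = middle,
   2 = bottom of d2).  Two vertices are adjacent if they lie in a common block
   of d1 (rows 0,1) or of d2 (rows 1,2). *)
Definition stack_rel k (d1 d2 : diagram k) : rel (V k * 'I_3) :=
  fun x y =>
    [&& (x.2 <= 1)%N, (y.2 <= 1)%N &
        [exists B in d1, ((x.1, x.2 == 1%N :> nat) \in B) &&
                         ((y.1, y.2 == 1%N :> nat) \in B)]]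
    || [&& (1 <= x.2)%N, (1 <= y.2)%N &
        [exists B in d2, ((x.1, x.2 == 2%N :> nat) \in B) &&
                         ((y.1, y.2 == 2%N :> nat) \in B)]].

Definition stack_comps k (d1 d2 : diagram k) : {set {set (V k * 'I_3)}} :=
  [set [set y | connect (stack_rel d1 d2) x y] | x : V k * 'I_3].

Definition diag_prod k (d1 d2 : diagram k) : diagram k :=
  [set [set p : V k * bool |
         [exists w : V k * 'I_3, (w \in C) && (w.1 == p.1) && (w.2 == (if p.2 then 2 else 0)%N :> nat)]]
   | C : {set (V k * 'I_3)} in stack_comps d1 d2] :\ set0.

Definition l_mid k (d1 d2 : diagram k) : nat :=
  #|[set C in stack_comps d1 d2 | [forall w in C, w.2 == 1%N :> nat]]|.

Definition Gram (k s1 s2 : nat) : 'M[{poly int}]_(#|Jset k s1 s2|) :=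
  \matrix_(i, j)
    let dD := d_of (enum_val i) in
    let dE := d_of (enum_val j) in
    if prop_num (diag_prod dD dE) == (2 * s1 + s2)%N then 'X ^+ (l_mid dD dE) else 0.

(* Main.v *)
Require Import Defs.
From HB Require Import structures.
From mathcomp Require Import all_boot all_order all_algebra all_fingroup.
Set Implicit Arguments. Unset Strict Implicit. Unset Printing Implicit Defensive.
Import GRing.Theory.

Section Comb.
Variable k : nat.


Lemma mem_lift_top (B : {set V k}) v b : ((v,b) \in lift_top B) = ~~ b && (v \in B).
Proof.
apply/imsetP/andP => [[u uB [-> ->]]//|[nb vB]]; exists v => //.
by move: nb; case: b.
Qed.

Lemma mem_lift_bot (B : {set V k}) v b : ((v,b) \in lift_bot B) = b && (v \in B).
Proof.
apply/imsetP/andP => [[u uB [-> ->]]//|[nb vB]]; exists v => //.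
by move: nb; case: b.
Qed.

Definition good (D : {set {set V k}} * {set {set V k}}) :=
  partition D.1 [set: V k] && (D.2 \subset D.1).

Lemma good_cover D (v : V k) : good D -> v \in cover D.1.
Proof. by case/andP => /and3P[/eqP -> _ _] _; rewrite inE. Qed.

Lemma good_triv D : good D -> trivIset D.1.
Proof. by case/andP => /and3P[]. Qed.

Lemma edge_d D (v w : V k) b b' : good D ->
  [exists X in d_of D, ((v,b) \in X) && ((w,b') \in X)] =
  (pblock D.1 v == pblock D.1 w) && ((pblock D.1 v \in D.2) || (b == b')).
Proof.
move=> gD; have tI := good_triv gD; have [_ sub] := andP gD.
apply/existsP/andP.
- case=> X /and3P[]; rewrite /d_of !inE -!orbA => /or3P[].
  + case/imsetP => B BT ->; rewrite !inE !mem_lift_top !mem_lift_bot.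
    have BP : B \in D.1 by apply: (subsetP sub).
    move=> /orP[/andP[_ vB]|/andP[_ vB]] /orP[/andP[_ wB]|/andP[_ wB]];
    by rewrite (def_pblock tI BP vB) (def_pblock tI BP wB) BT.
  + case/imsetP => B; rewrite inE => /andP[BT BP] ->; rewrite !mem_lift_top.
    case/andP => /negbTE -> vB /andP[/negbTE -> wB].
    by rewrite (def_pblock tI BP vB) (def_pblock tI BP wB) eqxx orbT.
  + case/imsetP => B; rewrite inE => /andP[BT BP] ->; rewrite !mem_lift_bot.
    case/andP => -> vB /andP[-> wB].
    by rewrite (def_pblock tI BP vB) (def_pblock tI BP wB) eqxx orbT.
- move=> [/eqP eqb H].
  have vc := good_cover v gD; have wc := good_cover w gD.
  have vB := vc; rewrite -mem_pblock in vB.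
  have wB := wc; rewrite -mem_pblock -eqb in wB.
  have BP := pblock_mem vc.
  case BT: (pblock D.1 v \in D.2) H => /= H.
  + exists (lift_top (pblock D.1 v) :|: lift_bot (pblock D.1 v)).
    rewrite /d_of !in_setU (imset_f (fun B => lift_top B :|: lift_bot B)) //=.
    rewrite !mem_lift_top !mem_lift_bot vB wB.
    by case: (b) (b') => [] [].
  + move/eqP: H => Hb; rewrite -Hb; case: b {Hb}.
    * exists (lift_bot (pblock D.1 v)).
      by rewrite /d_of !in_setU (imset_f (fun B => lift_bot B)) ?inE ?BT ?BP ?orbT //= !mem_lift_bot vB wB.
    * exists (lift_top (pblock D.1 v)).
      by rewrite /d_of !in_setU (imset_f (fun B => lift_top B)) ?inE ?BT ?BP ?orbT //= !mem_lift_top vB wB.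
Qed.


Lemma connect_inv (T : finType) (e : rel T) (P : pred T) :
  (forall x y, P x -> e x y -> P y) -> forall x y, connect e x y -> P x -> P y.
Proof.
move=> H x y /connectP [p pth ->]; elim: p x pth => //= z p IH x /andP[exz pz] Px.
by apply: IH pz (H _ _ Px exz).
Qed.

Notation W := (V k * 'I_3)%type.
Definition r0 : 'I_3 := @Ordinal 3 0 isT.
Definition r1 : 'I_3 := @Ordinal 3 1 isT.
Definition r2 : 'I_3 := @Ordinal 3 2 isT.

Lemma row1E (w : W) : (w.2 == 1 :> nat) -> w = (w.1, r1).
Proof. by case: w => v [r hr] /= /eqP Hr; subst; congr pair; apply: val_inj. Qed.
Lemma row0E (w : W) : (w.2 == 0 :> nat) -> w = (w.1, r0).
Proof. by case: w => v [r hr] /= /eqP Hr; subst; congr pair; apply: val_inj. Qed.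
Lemma row2E (w : W) : (w.2 == 2 :> nat) -> w = (w.1, r2).
Proof. by case: w => v [r hr] /= /eqP Hr; subst; congr pair; apply: val_inj. Qed.

Lemma stack_sym (d1 d2 : diagram k) : symmetric (stack_rel d1 d2).
Proof.
have E : forall (d : diagram k) a b,
  [exists B in d, (a \in B) && (b \in B)] = [exists B in d, (b \in B) && (a \in B)].
  by move=> d a b; apply: eq_existsb => B; rewrite (andbC (a \in B)).
move=> x y; rewrite /stack_rel E (E d2).
by rewrite (andbCA (x.2 <= 1)%N) (andbCA (1 <= x.2)%N) !andbA.
Qed.

Definition comp (d1 d2 : diagram k) (x : W) := [set y | connect (stack_rel d1 d2) x y].

Lemma comp_refl (d1 d2 : diagram k) x : x \in comp d1 d2 x.
Proof. by rewrite inE connect0. Qed.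

Lemma comp_eq (d1 d2 : diagram k) x y : y \in comp d1 d2 x -> comp d1 d2 y = comp d1 d2 x.
Proof.
rewrite inE => cxy; apply/setP => z; rewrite !inE.
apply/idP/idP => [|cxz]; first exact: connect_trans.
by apply: connect_trans cxz; rewrite (sym_connect_sym (@stack_sym d1 d2)).
Qed.

Lemma compsP (d1 d2 : diagram k) C : reflect (exists x, C = comp d1 d2 x) (C \in stack_comps d1 d2).
Proof. by apply: (iffP imsetP) => [[x _ ->]|[x ->]]; exists x. Qed.

Lemma comps_share (d1 d2 : diagram k) C1 C2 y : C1 \in stack_comps d1 d2 -> C2 \in stack_comps d1 d2 ->
  y \in C1 -> y \in C2 -> C1 = C2.
Proof.
move=> /compsP[x1 ->] /compsP[x2 ->] h1 h2.
by rewrite -(comp_eq h1) -(comp_eq h2).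
Qed.

Lemma comp_closed (d1 d2 : diagram k) C x y : C \in stack_comps d1 d2 -> x \in C ->
  stack_rel d1 d2 x y -> y \in C.
Proof.
move=> /compsP[z ->]; rewrite !inE => czx exy.
by apply: connect_trans czx (connect1 exy).
Qed.

Lemma comp_in (d1 d2 : diagram k) x : comp d1 d2 x \in stack_comps d1 d2.
Proof. by apply/compsP; exists x. Qed.


Definition Th (d1 d2 : diagram k) : {set {set W}} :=
  [set C in stack_comps d1 d2 | [exists w in C, w.2 == 0 :> nat] && [exists w in C, w.2 == 2 :> nat]].

Definition proj (C : {set W}) : {set V k * bool} :=
  [set p : V k * bool |
         [exists w : W, (w \in C) && (w.1 == p.1) && (w.2 == (if p.2 then 2 else 0)%N :> nat)]].

Lemma proj_top C : [exists v, (v, false) \in proj C] = [exists w in C, w.2 == 0 :> nat].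
Proof.
apply/existsP/existsP => [[v]|[w /andP[wC w0]]].
- by rewrite inE => /existsP[w /andP[/andP[wC _] /= w0]]; exists w; rewrite wC.
- by exists w.1; rewrite inE; apply/existsP; exists w; rewrite wC eqxx.
Qed.

Lemma proj_bot C : [exists v, (v, true) \in proj C] = [exists w in C, w.2 == 2 :> nat].
Proof.
apply/existsP/existsP => [[v]|[w /andP[wC w0]]].
- by rewrite inE => /existsP[w /andP[/andP[wC _] /= w0]]; exists w; rewrite wC.
- by exists w.1; rewrite inE; apply/existsP; exists w; rewrite wC eqxx.
Qed.

Lemma prop_Th (d1 d2 : diagram k) : prop_num (diag_prod d1 d2) = #|Th d1 d2|.
Proof.
rewrite /prop_num.
have -> : [set B in diag_prod d1 d2 | [exists v, (v, false) \in B] && [exists v, (v, true) \in B]]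
   = proj @: Th d1 d2.
  apply/setP => B; rewrite inE /diag_prod; apply/andP/imsetP.
  - case; rewrite !inE => /andP[_ /imsetP[C CC ->]] /andP[t b].
    by exists C => //; rewrite inE CC -proj_top -proj_bot t b.
  - case=> C; rewrite inE => /andP[CC /andP[t b]] ->.
    rewrite proj_top proj_bot t b; split => //.
    rewrite !inE; apply/andP; split; last exact: imset_f.
    case/existsP: t => w /andP[wC w0]; apply/set0Pn; exists (w.1, false).
    by rewrite inE; apply/existsP; exists w; rewrite wC eqxx.
apply: card_in_imset => C1 C2; rewrite !inE => /andP[C1c /andP[t1 _]] /andP[C2c _] eqp.
case/existsP: t1 => w /andP[wC w0].
have : (w.1, false) \in proj C2.
  by rewrite -eqp inE; apply/existsP; exists w; rewrite wC eqxx.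
rewrite inE => /existsP[w' /andP[/andP[w'C /eqP e1] /= e2]].
have ww : w' = w by rewrite (row0E w0) (row0E e2) e1.
by apply: (comps_share C1c C2c wC); rewrite -ww.
Qed.


Section DE.
Variables D E : {set {set V k}} * {set {set V k}}.
Hypotheses (gDh : good D) (gEh : good E).
Let dD := d_of D.
Let dE := d_of E.
Let R := stack_rel dD dE.
Let pD v := pblock D.1 v.
Let pE v := pblock E.1 v.

Lemma SR (x y : W) : R x y =
  [&& (x.2 <= 1)%N, (y.2 <= 1)%N, pD x.1 == pD y.1 &
      (pD x.1 \in D.2) || ((x.2 == 1 :> nat) == (y.2 == 1 :> nat))] ||
  [&& (1 <= x.2)%N, (1 <= y.2)%N, pE x.1 == pE y.1 &
      (pE x.1 \in E.2) || ((x.2 == 2 :> nat) == (y.2 == 2 :> nat))].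
Proof. by rewrite /R /stack_rel /dD /dE !edge_d. Qed.

Lemma e01 v w : pD v = pD w -> pD v \in D.2 -> R (v, r0) (w, r1).
Proof. by move=> h1 h2; rewrite SR /= h1 eqxx -h1 h2. Qed.
Lemma e11D v w : pD v = pD w -> R (v, r1) (w, r1).
Proof. by move=> h1; rewrite SR /= h1 eqxx orbT. Qed.
Lemma e12 v w : pE v = pE w -> pE v \in E.2 -> R (v, r1) (w, r2).
Proof. by move=> h1 h2; rewrite SR /= h1 eqxx -h1 h2. Qed.
Lemma e11E v w : pE v = pE w -> R (v, r1) (w, r1).
Proof. by move=> h1; rewrite SR /= h1 !eqxx !orbT. Qed.

Lemma pD_mem v : pD v \in D.1.
Proof. exact: pblock_mem (good_cover v gDh). Qed.
Lemma pE_mem v : pE v \in E.1.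
Proof. exact: pblock_mem (good_cover v gEh). Qed.
Lemma pD_in v : v \in pD v.
Proof. by rewrite /pD mem_pblock (good_cover v gDh). Qed.
Lemma pE_in v : v \in pE v.
Proof. by rewrite /pE mem_pblock (good_cover v gEh). Qed.
Lemma pD_def B v : B \in D.1 -> v \in B -> pD v = B.
Proof. exact: def_pblock (good_triv gDh). Qed.
Lemma pE_def B v : B \in E.1 -> v \in B -> pE v = B.
Proof. exact: def_pblock (good_triv gEh). Qed.

Lemma inv_block B x y : B \in D.1 -> B \in E.1 -> connect R x y ->
  pD x.1 = B -> pE x.1 = B -> pD y.1 = B /\ pE y.1 = B.
Proof.
move=> BD BE cxy h1 h2.
have H : forall a b : W, (fun z : W => (pD z.1 == B) && (pE z.1 == B)) a -> R a b -> (fun z : W => (pD z.1 == B) && (pE z.1 == B)) b.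
  move=> a b /andP[/eqP a1 /eqP a2]; rewrite SR => /orP[] /and4P[_ _ /eqP ab _].
  - have bB : b.1 \in B by rewrite -a1 ab pD_in.
    by rewrite (pD_def BD bB) (pE_def BE bB) !eqxx.
  - have bB : b.1 \in B by rewrite -a2 ab pE_in.
    by rewrite (pD_def BD bB) (pE_def BE bB) !eqxx.
have := connect_inv H cxy.
by rewrite h1 h2 eqxx => /(_ isT) /andP[/eqP -> /eqP ->].
Qed.

Lemma inv_mid B x y : B \in D.1 -> B \in E.1 -> B \notin D.2 -> B \notin E.2 ->
  connect R x y -> pD x.1 = B -> pE x.1 = B -> (x.2 == 1 :> nat) -> (y.2 == 1 :> nat).
Proof.
move=> BD BE nD nE cxy h1 h2 x1.
have H : forall a b : W, (fun z : W => [&& pD z.1 == B, pE z.1 == B & z.2 == 1 :> nat]) a -> R a b -> (fun z : W => [&& pD z.1 == B, pE z.1 == B & z.2 == 1 :> nat]) b.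
  move=> a b /and3P[/eqP a1 /eqP a2 /eqP a3]; rewrite SR a3 => /orP[] /and4P[_ b2 /eqP ab].
  - rewrite a1 (negbTE nD) /= eq_sym => /eqP b3.
    have bB : b.1 \in B by rewrite -a1 ab pD_in.
    by rewrite (pD_def BD bB) (pE_def BE bB) !eqxx b3.
  - rewrite a2 (negbTE nE) /= => /eqP b3.
    have bB : b.1 \in B by rewrite -a2 ab pE_in.
    rewrite (pD_def BD bB) (pE_def BE bB) !eqxx /=.
    by move: b2 b3; case: (b.2) => [[|[|[|]]]].
have := connect_inv H cxy.
by rewrite h1 h2 x1 !eqxx => /(_ isT) /and3P[].
Qed.

Lemma inv_top x y : connect R x y -> (x.2 == 0 :> nat) -> pD x.1 \notin D.2 -> (y.2 == 0 :> nat).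
Proof.
move=> cxy x0 nD.
have H : forall a b : W, (fun z : W => (z.2 == 0 :> nat) && (pD z.1 \notin D.2)) a -> R a b -> (fun z : W => (z.2 == 0 :> nat) && (pD z.1 \notin D.2)) b.
  move=> a b /andP[/eqP a0 na]; rewrite SR a0 /= orbF => /and3P[b1 /eqP ab].
  rewrite -ab (negbTE na) /= eq_sym => /eqP b0; rewrite andbT.
  by move: b1 b0; case: (b.2) => [[|[|]]].
have := connect_inv H cxy.
by rewrite x0 nD => /(_ isT) /andP[].
Qed.

Lemma inv_bot x y : connect R x y -> (x.2 == 2 :> nat) -> pE x.1 \notin E.2 -> (y.2 == 2 :> nat).
Proof.
move=> cxy x0 nD.
have H : forall a b : W, (fun z : W => (z.2 == 2 :> nat) && (pE z.1 \notin E.2)) a -> R a b -> (fun z : W => (z.2 == 2 :> nat) && (pE z.1 \notin E.2)) b.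
  move=> a b /andP[/eqP a0 na]; rewrite SR a0 /= => /and3P[b1 /eqP ab].
  rewrite -ab (negbTE na) /= => /eqP b0; rewrite andbT.
  by move: b1 b0; case: (b.2) => [[|[|[|]]]].
have := connect_inv H cxy.
by rewrite x0 nD => /(_ isT) /andP[].
Qed.


Lemma Rsym x y : R x y = R y x.
Proof. exact: stack_sym. Qed.

Lemma comp_ne C : C \in stack_comps dD dE -> exists w, w \in C.
Proof. by case/compsP => x ->; exists x; apply: comp_refl. Qed.

Definition Mset := [set C in stack_comps dD dE | [forall w in C, w.2 == 1 :> nat]].

Lemma l_midE : l_mid dD dE = #|Mset|.
Proof. by []. Qed.

Lemma Mset_comp C : C \in Mset -> C \in stack_comps dD dE.
Proof. by rewrite inE => /andP[]. Qed.

Lemma M_mid C w : C \in Mset -> w \in C -> (w.2 == 1 :> nat).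
Proof. by rewrite inE => /andP[_ /forall_inP H] /H. Qed.

Definition gD (C : {set W}) := if [pick w in C] is Some w then pD w.1 else set0.
Definition gE (C : {set W}) := if [pick w in C] is Some w then pE w.1 else set0.

Lemma g_pick C : C \in Mset -> exists v, [/\ (v, r1) \in C, gD C = pD v & gE C = pE v].
Proof.
move=> CM; rewrite /gD /gE; case: pickP => [w wC|none].
- by exists w.1; rewrite -(row1E (M_mid CM wC)).
- by case: (comp_ne (Mset_comp CM)) => w wC; move: (none w); rewrite wC.
Qed.

Lemma M_notD C v : C \in Mset -> (v, r1) \in C -> pD v \notin D.2.
Proof.
move=> CM vC; apply/negP => vT.
have : (v, r0) \in C by apply: comp_closed (Mset_comp CM) vC _; rewrite stack_sym; apply: e01.
by move/(M_mid CM).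
Qed.

Lemma M_notE C v : C \in Mset -> (v, r1) \in C -> pE v \notin E.2.
Proof.
move=> CM vC; apply/negP => vT.
have : (v, r2) \in C by apply: comp_closed (Mset_comp CM) vC _; apply: e12.
by move/(M_mid CM).
Qed.

Lemma sameD C v w : C \in stack_comps dD dE -> (v, r1) \in C -> pD v = pD w -> (w, r1) \in C.
Proof. by move=> CC vC e; apply: comp_closed CC vC _; apply: e11D. Qed.
Lemma sameE C v w : C \in stack_comps dD dE -> (v, r1) \in C -> pE v = pE w -> (w, r1) \in C.
Proof. by move=> CC vC e; apply: comp_closed CC vC _; apply: e11E. Qed.

Lemma gD_in C : C \in Mset -> gD C \in D.1 :\: D.2.
Proof.
move=> CM; case: (g_pick CM) => v [vC -> _].
by rewrite inE (M_notD CM vC) pD_mem.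
Qed.
Lemma gE_in C : C \in Mset -> gE C \in E.1 :\: E.2.
Proof.
move=> CM; case: (g_pick CM) => v [vC _ ->].
by rewrite inE (M_notE CM vC) pE_mem.
Qed.

Lemma gD_inj : {in Mset &, injective gD}.
Proof.
move=> C1 C2 C1M C2M; case: (g_pick C1M) => v1 [v1C -> _]; case: (g_pick C2M) => v2 [v2C -> _] e.
by apply: (comps_share (Mset_comp C1M) (Mset_comp C2M) (sameD (Mset_comp C1M) v1C e)).
Qed.
Lemma gE_inj : {in Mset &, injective gE}.
Proof.
move=> C1 C2 C1M C2M; case: (g_pick C1M) => v1 [v1C _ ->]; case: (g_pick C2M) => v2 [v2C _ ->] e.
by apply: (comps_share (Mset_comp C1M) (Mset_comp C2M) (sameE (Mset_comp C1M) v1C e)).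
Qed.

Lemma gD_sub : gD @: Mset \subset D.1 :\: D.2.
Proof. by apply/subsetP => _ /imsetP[C CM ->]; apply: gD_in. Qed.
Lemma gE_sub : gE @: Mset \subset E.1 :\: E.2.
Proof. by apply/subsetP => _ /imsetP[C CM ->]; apply: gE_in. Qed.

Lemma l_leD : (l_mid dD dE <= #|D.1 :\: D.2|)%N.
Proof. by rewrite l_midE -(card_in_imset gD_inj) subset_leq_card // gD_sub. Qed.
Lemma l_leE : (l_mid dD dE <= #|E.1 :\: E.2|)%N.
Proof. by rewrite l_midE -(card_in_imset gE_inj) subset_leq_card // gE_sub. Qed.

Section EqMid.
Hypothesis eqD : l_mid dD dE = #|D.1 :\: D.2|.
Hypothesis eqE : l_mid dD dE = #|E.1 :\: E.2|.

Lemma gD_im : gD @: Mset = D.1 :\: D.2.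
Proof. by apply/eqP; rewrite eqEcard gD_sub (card_in_imset gD_inj) -l_midE eqD leqnn. Qed.
Lemma gE_im : gE @: Mset = E.1 :\: E.2.
Proof. by apply/eqP; rewrite eqEcard gE_sub (card_in_imset gE_inj) -l_midE eqE leqnn. Qed.

Lemma gD_mem C w : C \in Mset -> (w \in gD C) = ((w, r1) \in C).
Proof.
move=> CM; apply/idP/idP => [|wC].
- case: (g_pick CM) => v [vC -> _] wv.
  by apply: sameD (Mset_comp CM) vC _; apply/esym; exact: same_pblock (good_triv gDh) wv.
- have : pD w \in D.1 :\: D.2 by rewrite inE (M_notD CM wC) pD_mem.
  rewrite -gD_im => /imsetP[C' C'M e].
  case: (g_pick C'M) (e) => v' [v'C e' _]; rewrite e' => e2.
  have wC' := sameD (Mset_comp C'M) v'C (esym e2).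
  have -> : C = C' by apply: comps_share (Mset_comp CM) (Mset_comp C'M) wC wC'.
  by rewrite -e pD_in.
Qed.

Lemma gE_mem C w : C \in Mset -> (w \in gE C) = ((w, r1) \in C).
Proof.
move=> CM; apply/idP/idP => [|wC].
- case: (g_pick CM) => v [vC _ ->] wv.
  by apply: sameE (Mset_comp CM) vC _; apply/esym; exact: same_pblock (good_triv gEh) wv.
- have : pE w \in E.1 :\: E.2 by rewrite inE (M_notE CM wC) pE_mem.
  rewrite -gE_im => /imsetP[C' C'M e].
  case: (g_pick C'M) (e) => v' [v'C _ e']; rewrite e' => e2.
  have wC' := sameE (Mset_comp C'M) v'C (esym e2).
  have -> : C = C' by apply: comps_share (Mset_comp CM) (Mset_comp C'M) wC wC'.
  by rewrite -e pE_in.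
Qed.

Lemma nonT_eq : D.1 :\: D.2 = E.1 :\: E.2.
Proof.
rewrite -gD_im -gE_im; apply: eq_in_imset => C CM.
by apply/setP => w; rewrite gD_mem // gE_mem.
Qed.

End EqMid.


Lemma e00 v w : pD v = pD w -> R (v, r0) (w, r0).
Proof. by move=> h1; rewrite SR /= h1 !eqxx !orbT. Qed.
Lemma e22 v w : pE v = pE w -> R (v, r2) (w, r2).
Proof. by move=> h1; rewrite SR /= h1 !eqxx !orbT. Qed.

Lemma comp_conn C a b : C \in stack_comps dD dE -> a \in C -> b \in C -> connect R a b.
Proof.
case/compsP => x -> ax bx; rewrite -(comp_eq ax) inE in bx; exact: bx.
Qed.

Definition hD (C : {set W}) := if [pick w in C | w.2 == 0 :> nat] is Some w then pD w.1 else set0.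
Definition hE (C : {set W}) := if [pick w in C | w.2 == 2 :> nat] is Some w then pE w.1 else set0.
Let ThS := Th dD dE.

Lemma Th_comp C : C \in ThS -> C \in stack_comps dD dE.
Proof. by rewrite inE => /andP[]. Qed.

Lemma Th_top C : C \in ThS -> exists v, (v, r0) \in C /\ hD C = pD v.
Proof.
rewrite /hD => CT; case: pickP => [w /andP[wC w0]|none].
- by exists w.1; rewrite -(row0E w0).
- move: CT; rewrite inE => /and3P[_ /exists_inP[w wC w0] _].
  by move: (none w); rewrite wC w0.
Qed.
Lemma Th_bot C : C \in ThS -> exists v, (v, r2) \in C /\ hE C = pE v.
Proof.
rewrite /hE => CT; case: pickP => [w /andP[wC w0]|none].
- by exists w.1; rewrite -(row2E w0).
- move: CT; rewrite inE => /and3P[_ _ /exists_inP[w wC w0]].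
  by move: (none w); rewrite wC w0.
Qed.

Lemma hD_in C : C \in ThS -> hD C \in D.2.
Proof.
move=> CT; case: (Th_top CT) => v [vC ->]; case: (Th_bot CT) => u [uC _].
apply/negPn/negP => nT.
by have := inv_top (comp_conn (Th_comp CT) vC uC) isT nT.
Qed.
Lemma hE_in C : C \in ThS -> hE C \in E.2.
Proof.
move=> CT; case: (Th_top CT) => v [vC _]; case: (Th_bot CT) => u [uC ->].
apply/negPn/negP => nT.
by have := inv_bot (comp_conn (Th_comp CT) uC vC) isT nT.
Qed.

Lemma hD_inj : {in ThS &, injective hD}.
Proof.
move=> C1 C2 C1T C2T; case: (Th_top C1T) => v1 [v1C ->]; case: (Th_top C2T) => v2 [v2C ->] e.
apply: (comps_share (Th_comp C1T) (Th_comp C2T) _ v2C).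
by apply: comp_closed (Th_comp C1T) v1C _; apply: e00.
Qed.
Lemma hE_inj : {in ThS &, injective hE}.
Proof.
move=> C1 C2 C1T C2T; case: (Th_bot C1T) => v1 [v1C ->]; case: (Th_bot C2T) => v2 [v2C ->] e.
apply: (comps_share (Th_comp C1T) (Th_comp C2T) _ v2C).
by apply: comp_closed (Th_comp C1T) v1C _; apply: e22.
Qed.

Lemma hD_sub : hD @: ThS \subset D.2.
Proof. by apply/subsetP => _ /imsetP[C CM ->]; apply: hD_in. Qed.
Lemma hE_sub : hE @: ThS \subset E.2.
Proof. by apply/subsetP => _ /imsetP[C CM ->]; apply: hE_in. Qed.

Lemma Th_leD : (#|ThS| <= #|D.2|)%N.
Proof. by rewrite -(card_in_imset hD_inj) subset_leq_card // hD_sub. Qed.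

Section EqTh.
Hypothesis nT : D.1 :\: D.2 = E.1 :\: E.2.
Hypothesis eqD : #|ThS| = #|D.2|.
Hypothesis eqE : #|ThS| = #|E.2|.

Lemma hD_im : hD @: ThS = D.2.
Proof. by apply/eqP; rewrite eqEcard hD_sub (card_in_imset hD_inj) eqD leqnn. Qed.
Lemma hE_im : hE @: ThS = E.2.
Proof. by apply/eqP; rewrite eqEcard hE_sub (card_in_imset hE_inj) eqE leqnn. Qed.

Lemma Th3D C w : C \in ThS -> (w, r1) \in C -> pD w \in D.2.
Proof.
move=> CT wC; apply/negPn/negP => nD.
have B1 : pD w \in E.1 :\: E.2 by rewrite -nT inE nD pD_mem.
move: B1; rewrite inE => /andP[nE BE].
have pEw : pE w = pD w by apply: pE_def BE (pD_in w).
case: (Th_top CT) => v [vC _].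
have := inv_mid (pD_mem w) BE nD nE (comp_conn (Th_comp CT) wC vC) erefl pEw isT.
by [].
Qed.

Lemma Th3E C w : C \in ThS -> (w, r1) \in C -> pE w \in E.2.
Proof.
move=> CT wC; apply/negPn/negP => nE.
have B1 : pE w \in D.1 :\: D.2 by rewrite nT inE nE pE_mem.
move: B1; rewrite inE => /andP[nD BD].
have pDw : pD w = pE w by apply: pD_def BD (pE_in w).
case: (Th_bot CT) => v [vC _].
have := inv_mid BD (pE_mem w) nD nE (comp_conn (Th_comp CT) wC vC) pDw erefl isT.
by [].
Qed.

Lemma hD_mem C w : C \in ThS -> (w \in hD C) = ((w, r1) \in C).
Proof.
move=> CT; apply/idP/idP => [|wC].
- case: (Th_top CT) => v [vC e] wv.
  have vT := hD_in CT; rewrite e in vT wv.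
  apply: comp_closed (Th_comp CT) vC _; apply: e01 => //.
  by apply/esym; exact: same_pblock (good_triv gDh) wv.
- have := Th3D CT wC; rewrite -hD_im => /imsetP[C' C'T e].
  case: (Th_top C'T) (e) => v' [v'C e']; rewrite e' => e2.
  have wC' : (w, r1) \in C'.
    apply: comp_closed (Th_comp C'T) v'C _; apply: e01; first by rewrite e2.
    by rewrite -e2 (Th3D CT wC).
  have -> : C = C' by apply: comps_share (Th_comp CT) (Th_comp C'T) wC wC'.
  by rewrite -e pD_in.
Qed.

Lemma hE_mem C w : C \in ThS -> (w \in hE C) = ((w, r1) \in C).
Proof.
move=> CT; apply/idP/idP => [|wC].
- case: (Th_bot CT) => v [vC e] wv.
  have vT := hE_in CT; rewrite e in vT wv.
  apply: comp_closed (Th_comp CT) vC _; rewrite stack_sym; apply: e12.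
    exact: same_pblock (good_triv gEh) wv.
  by have -> : pE w = pE v by exact: same_pblock (good_triv gEh) wv.
- have := Th3E CT wC; rewrite -hE_im => /imsetP[C' C'T e].
  case: (Th_bot C'T) (e) => v' [v'C e']; rewrite e' => e2.
  have wC' : (w, r1) \in C'.
    apply: comp_closed (Th_comp C'T) v'C _; rewrite stack_sym; apply: e12 => //.
    exact: (Th3E CT wC).
  have -> : C = C' by apply: comps_share (Th_comp CT) (Th_comp C'T) wC wC'.
  by rewrite -e pE_in.
Qed.

Lemma T_eq : D.2 = E.2.
Proof.
rewrite -hD_im -hE_im; apply: eq_in_imset => C CT.
by apply/setP => w; rewrite hD_mem // hE_mem.
Qed.

Lemma DE_eq : D = E.
Proof.
have [_ sD] := andP gDh; have [_ sE] := andP gEh.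
have e1 : D.1 = E.1.
  by rewrite -(setID D.1 D.2) -(setID E.1 E.2) (setIidPr sD) (setIidPr sE) nT T_eq.
move: e1 T_eq; case: (D) (E) => [a b] [c d] /= -> ->; done.
Qed.

End EqTh.


Section Diag.
Hypothesis ED : E = D.

Lemma blk_pick B : B \in D.1 -> exists b, b \in B.
Proof.
move=> BD; have /andP[P _] := gDh.
by have /set0Pn[b bB] := partition_neq0 P BD; exists b.
Qed.

Lemma diag_l : (#|D.1 :\: D.2| <= l_mid dD dE)%N.
Proof.
rewrite l_midE; apply: leq_trans (leq_imset_card gD _).
apply: subset_leq_card; apply/subsetP => B; rewrite inE => /andP[nD BD].
have BE : B \in E.1 by rewrite ED.
have nE : B \notin E.2 by rewrite ED.
case: (blk_pick BD) => b bB.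
have pDb := pD_def BD bB; have pEb := pE_def BE bB.
have CM : comp dD dE (b, r1) \in Mset.
  rewrite inE comp_in; apply/forall_inP => w; rewrite inE => cw.
  exact: (inv_mid BD BE nD nE cw pDb pEb).
apply/imsetP; exists (comp dD dE (b, r1)) => //.
case: (g_pick CM) => v [vC -> _]; rewrite inE in vC.
by case: (inv_block BD BE vC pDb pEb).
Qed.

Lemma diag_th : (#|D.2| <= #|ThS|)%N.
Proof.
apply: leq_trans (leq_imset_card hD _).
apply: subset_leq_card; apply/subsetP => B BT.
have [_ sD] := andP gDh.
have BD : B \in D.1 by apply: (subsetP sD).
have BE : B \in E.1 by rewrite ED.
have BTE : B \in E.2 by rewrite ED.
case: (blk_pick BD) => b bB.
have pDb := pD_def BD bB; have pEb := pE_def BE bB.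
have c1 : connect R (b, r0) (b, r1) by apply: connect1; apply: e01 => //; rewrite pDb.
have c2 : connect R (b, r0) (b, r2).
  by apply: connect_trans c1 (connect1 _); apply: e12 => //; rewrite pEb.
have CT : comp dD dE (b, r0) \in ThS.
  rewrite inE comp_in /=; apply/andP; split; apply/exists_inP.
  - by exists (b, r0) => //; apply: comp_refl.
  - by exists (b, r2) => //; rewrite inE.
apply/imsetP; exists (comp dD dE (b, r0)) => //.
case: (Th_top CT) => v [vC ->]; rewrite inE in vC.
by case: (inv_block BD BE vC pDb pEb).
Qed.

End Diag.

End DE.
End Comb.

Local Open Scope ring_scope.


Lemma det_monic n (A : 'M[{poly int}]_n) (w : 'I_n -> nat) (l : 'I_n -> 'I_n -> nat) :
  (forall i j, A i j != 0 -> A i j = 'X^(l i j)) ->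
  (forall i, A i i = 'X^(w i)) ->
  (forall i j, i != j -> A i j != 0 -> (2 * l i j < w i + w j)%N) ->
  \det A != 0 /\ lead_coef (\det A) = 1.
Proof.
move=> HA Hd Hs.
have Hl : forall i, l i i = w i.
  move=> i; have nz : A i i != 0 by rewrite Hd -size_poly_eq0 size_polyXn.
  have := congr1 (fun p : {poly int} => size p) (HA i i nz).
  by rewrite Hd /= !size_polyXn; case.
set N := (\sum_i w i)%N.
have Hsz : forall (s : 'S_n), s != 1%g ->
    (size (((-1) ^+ s * \prod_i A i (s i))%R : {poly int}) <= N)%N.
  move=> s s1; rewrite size_Msign.
  case: (boolP [forall i, A i (s i) != 0]) => [/forallP nz|].
  - rewrite (eq_bigr (fun i => 'X^(l i (s i)))); last by move=> i _; apply: HA.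
    rewrite prodrXr size_polyXn.
    have [i0 ni0] : exists i0, s i0 != i0.
      apply/existsP; apply: contraR s1 => /existsPn H.
      by apply/eqP/permP => i; rewrite perm1; apply/eqP; move/negPn: (H i).
    have le2 : forall i, (2 * l i (s i) <= w i + w (s i))%N.
      move=> i; case: (eqVneq (s i) i) => [->|ne]; first by rewrite Hl mul2n addnn.
      by apply: ltnW; apply: Hs; rewrite // eq_sym.
    have : (2 * (\sum_i l i (s i)) < 2 * N)%N.
      rewrite big_distrr /= (bigD1 i0) //= /N.
      have -> : (2 * (\sum_i w i) = \sum_i (w i + w (s i)))%N.
        rewrite big_split /= mul2n -addnn; congr addn.
        by rewrite (reindex_inj (@perm_inj _ s)).
      rewrite [X in (_ < X)%N](bigD1 i0) //=.
      apply: leq_trans (_ : (2 * l i0 (s i0)).+1 + \sum_(i | i != i0) (w i + w (s i)) <= _)%N.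
        by rewrite addSn ltnS leq_add2l; apply: leq_sum => i _; apply: le2.
      by rewrite leq_add2r; apply: Hs; rewrite // eq_sym.
    by rewrite ltn_pmul2l.
  - rewrite negb_forall => /existsP[i /negPn /eqP z].
    by rewrite (bigD1 i) //= z mul0r size_poly0.
rewrite /determinant (bigD1 1%g) //= odd_perm1 expr0 mul1r.
rewrite (eq_bigr (fun i => 'X^(w i))); last by move=> i _; rewrite perm1 Hd.
rewrite prodrXr -/N.
have Hr : (size ((\sum_(s : 'S_n | s != 1%g) (-1) ^+ s * \prod_i A i (s i))%R : {poly int}) < size ('X^N : {poly int}))%N.
  rewrite size_polyXn ltnS.
  apply: (big_ind (fun p : {poly int} => size p <= N)%N) => //.
  - by rewrite size_poly0.
  - by move=> p q hp hq; apply: leq_trans (size_polyD _ _) _; rewrite geq_max hp hq.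
have lc : lead_coef ('X^N + \sum_(s : 'S_n | s != 1%g) (-1) ^+ s * \prod_i A i (s i)) = 1.
  by rewrite lead_coefDl // lead_coefXn.
split => //; apply/eqP => e; move: lc; rewrite e lead_coef0 => /eqP.
by rewrite eq_sym oner_eq0.
Qed.



Lemma card_split (T : finType) (A : {set T}) (P : pred T) :
  (#|[set x in A | P x]| + #|[set x in A | ~~ P x]|)%N = #|A|.
Proof.
by rewrite -(cardsID [set x | P x] A); congr addn; apply: eq_card => x; rewrite !inE // andbC.
Qed.

Lemma J_good k s1 s2 D : D \in Jset k s1 s2 -> good D.
Proof. by rewrite inE => /and5P[/andP[P _] S _ _ _]; rewrite /good P S. Qed.

Lemma J_card k s1 s2 D : D \in Jset k s1 s2 -> #|D.2| = (2 * s1 + s2)%N.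
Proof.
rewrite inE => /and5P[_ _ _ /eqP c1 /eqP c2].
by rewrite -(card_split D.2 (fun B => gset B == B)) c1 c2 addnC.
Qed.

Lemma diag_facts k (D : {set {set V k}} * {set {set V k}}) : good D ->
  l_mid (d_of D) (d_of D) = #|D.1 :\: D.2| /\ prop_num (diag_prod (d_of D) (d_of D)) = #|D.2|.
Proof.
move=> g; split.
- by apply/eqP; rewrite eqn_leq (l_leD g g) (diag_l g g).
- by rewrite prop_Th; apply/eqP; rewrite eqn_leq (Th_leD g g) (diag_th g g).
Qed.

Lemma offdiag k (D E : {set {set V k}} * {set {set V k}}) : good D -> good E -> D != E ->
  prop_num (diag_prod (d_of D) (d_of E)) = #|D.2| -> #|D.2| = #|E.2| ->
  (2 * l_mid (d_of D) (d_of E) < #|D.1 :\: D.2| + #|E.1 :\: E.2|)%N.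
Proof.
move=> gD gE nDE hp hc.
have l1 := l_leD gD gE; have l2 := l_leD gD gE.
have l3 := l_leE gD gE.
rewrite mul2n -addnn.
move: l1; rewrite leq_eqVlt => /orP[/eqP eq1|lt1]; last by rewrite -addSn leq_add.
move: l3; rewrite leq_eqVlt => /orP[/eqP eq2|lt2]; last by rewrite -addnS leq_add // -eq1.
rewrite prop_Th in hp.
by move: nDE; rewrite (DE_eq gD gE (nonT_eq gD gE eq1 eq2) hp (etrans hp hc)) eqxx.
Qed.

Theorem lemma3p9 (k s1 s2 : nat) :
  (1 <= k)%N -> (s1 + s2 <= k)%N ->
  \det (Gram k s1 s2) != 0 /\ lead_coef (\det (Gram k s1 s2)) = 1.
Proof.
move=> _ _.
apply: (det_monic (w := fun i => #|(enum_val i).1 :\: (enum_val i).2|)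
         (l := fun i j => l_mid (d_of (enum_val i)) (d_of (enum_val j)))).
- move=> i j; rewrite mxE /=; case: ifP => [_ _ //|_]; by rewrite eqxx.
- move=> i; rewrite mxE /=.
  have Ji := enum_valP i; have [e1 e2] := diag_facts (J_good Ji).
  by rewrite e2 (J_card Ji) eqxx e1.
- move=> i j ij; rewrite mxE /=; case: ifP => [/eqP hp _|]; last by rewrite eqxx.
  have Ji := enum_valP i; have Jj := enum_valP j.
  apply: offdiag (J_good Ji) (J_good Jj) _ _ _.
  + by apply: contra ij => /eqP /enum_val_inj ->.
  + by rewrite hp (J_card Ji).
  + by rewrite (J_card Ji) (J_card Jj).
Qed.
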